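(* Let $\Phi\in\mathbb{R}^{n_{\mathscr D}\times n_g}$ and $y\in\mathbb{R}^{n_{\mathscr D}}$ with $\Phi^{\mathsf T}y\neq 0$, let $K\in\mathbb{R}^{n_g\times n_g}$ be symmetric positive definite, let $\lambda>0$, and let $g^{\mathrm{Reg}}=(\Phi^{\mathsf T}\Phi+\lambda K^{-1})^{-1}\Phi^{\mathsf T}y$. Then $g^{\mathrm{Reg}}\neq 0$, $\Phi g^{\mathrm{Reg}}-y\neq 0$, and with $$\rho := \lambda\,\frac{\big((g^{\mathrm{Reg}})^{\mathsf T}K^{-1}g^{\mathrm{Reg}}\big)^{1/2}}{\|\Phi g^{\mathrm{Reg}}-y\|}>0,$$ the vector $g^{\mathrm{Reg}}$ is a minimizer of $$\min_{g\in\mathbb{R}^{n_g}}\ \max_{\substack{\Delta\in\mathbb{R}^{n_{\mathscr D}\times n_g}\\ \|\Delta\|_K\le\rho}} \|(\Phi+\Delta)g-y\|.$$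
   Context: $\|\cdot\|$ denotes the Euclidean norm. For a symmetric positive definite $K\in\mathbb{R}^{n_g\times n_g}$ and a matrix $\Delta\in\mathbb{R}^{n_{\mathscr D}\times n_g}$, $\|\Delta\|_K := \big(\mathrm{tr}(\Delta K\Delta^{\mathsf T})\big)^{1/2}$. *)

(* Defs.v *)
From HB Require Import structures.
From mathcomp Require Import all_boot all_order all_algebra.
From mathcomp Require Import classical_sets reals.
Set Implicit Arguments. Unset Strict Implicit. Unset Printing Implicit Defensive.
Import Order.TTheory GRing.Theory Num.Theory.
Local Open Scope ring_scope.
Local Open Scope classical_set_scope.

Definition enorm (R : realType) (m : nat) (v : 'cV[R]_m) : R :=
  Num.sqrt (\sum_(i < m) v i 0 ^+ 2).

Definition Knorm (R : realType) (nD ng : nat) (K : 'M[R]_ng)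
  (D : 'M[R]_(nD, ng)) : R := Num.sqrt (\tr (D *m K *m D^T)).

Definition sym_posdef (R : realType) (n : nat) (K : 'M[R]_n) : Prop :=
  K^T = K /\ forall v : 'cV[R]_n, v != 0 -> 0 < (v^T *m K *m v) 0 0.

Definition gReg (R : realType) (nD ng : nat) (Phi : 'M[R]_(nD, ng))
  (y : 'cV[R]_nD) (K : 'M[R]_ng) (lam : R) : 'cV[R]_ng :=
  invmx (Phi^T *m Phi + lam *: invmx K) *m (Phi^T *m y).

(* Worst-case residual: max over ||Delta||_K <= rho of ||(Phi+Delta) g - y||,
   written as the supremum of the (compact, attained) set of values. *)
Definition worst_resid (R : realType) (nD ng : nat) (Phi : 'M[R]_(nD, ng))
  (y : 'cV[R]_nD) (K : 'M[R]_ng) (rho : R) (g : 'cV[R]_ng) : R :=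
  sup [set r : R | exists D : 'M[R]_(nD, ng),
                     Knorm K D <= rho /\ r = enorm ((Phi + D) *m g - y)].

(* Main.v *)
Require Import Defs.
From HB Require Import structures.
From mathcomp Require Import all_boot all_order all_algebra.
From mathcomp Require Import classical_sets reals.
From mathcomp Require Import ring lra.
Import Order.TTheory GRing.Theory Num.Theory.
Set Implicit Arguments. Unset Strict Implicit. Unset Printing Implicit Defensive.
Local Open Scope ring_scope.

Lemma entryB (R : realType) m n (A B : 'M[R]_(m, n)) i j : (A - B) i j = A i j - B i j.
Proof. by rewrite !mxE. Qed.
Lemma entryD (R : realType) m n (A B : 'M[R]_(m, n)) i j : (A + B) i j = A i j + B i j.
Proof. by rewrite !mxE. Qed.
Lemma entryZ (R : realType) m n (t : R) (A : 'M[R]_(m, n)) i j : (t *: A) i j = t * A i j.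
Proof. by rewrite !mxE. Qed.

Definition qf (R : realType) n (M : 'M[R]_n) (x y : 'cV[R]_n) : R :=
  (x^T *m M *m y) 0 0.

Lemma qfC (R : realType) n (M : 'M[R]_n) x y : M^T = M -> qf M x y = qf M y x.
Proof.
move=> hM; rewrite /qf.
have -> : (x^T *m M *m y) 0 0 = ((x^T *m M *m y)^T) 0 0 by rewrite [RHS]mxE.
by rewrite !trmx_mul !trmxK hM mulmxA.
Qed.

Lemma qfBl (R : realType) n (M : 'M[R]_n) x y z : qf M (x - y) z = qf M x z - qf M y z.
Proof. by rewrite /qf linearB /= !mulmxBl entryB. Qed.
Lemma qfBr (R : realType) n (M : 'M[R]_n) x y z : qf M z (x - y) = qf M z x - qf M z y.
Proof. by rewrite /qf mulmxBr entryB. Qed.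
Lemma qfDl (R : realType) n (M : 'M[R]_n) x y z : qf M (x + y) z = qf M x z + qf M y z.
Proof. by rewrite /qf linearD /= !mulmxDl entryD. Qed.
Lemma qfDr (R : realType) n (M : 'M[R]_n) x y z : qf M z (x + y) = qf M z x + qf M z y.
Proof. by rewrite /qf mulmxDr entryD. Qed.
Lemma qfZl (R : realType) n (M : 'M[R]_n) (t : R) x z : qf M (t *: x) z = t * qf M x z.
Proof. by rewrite /qf linearZ /= -!scalemxAl entryZ. Qed.
Lemma qfZr (R : realType) n (M : 'M[R]_n) (t : R) x z : qf M z (t *: x) = t * qf M z x.
Proof. by rewrite /qf -!scalemxAr entryZ. Qed.
Lemma qf0r (R : realType) n (M : 'M[R]_n) x : qf M x 0 = 0.
Proof. by rewrite /qf mulmx0 mxE. Qed.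

Lemma qf_ge0 (R : realType) n (M : 'M[R]_n) x : sym_posdef M -> 0 <= qf M x x.
Proof.
move=> [_ hp]; have [->|hx] := eqVneq x 0; first by rewrite qf0r.
exact/ltW/hp.
Qed.

Lemma qf_CS (R : realType) n (M : 'M[R]_n) a b : sym_posdef M ->
  qf M a b ^+ 2 <= qf M a a * qf M b b.
Proof.
move=> hM; have [->|hb] := eqVneq b 0; first by rewrite !qf0r expr0n /= mulr0.
have hq : 0 < qf M b b by apply: hM.2.
set t := qf M a b / qf M b b.
have := qf_ge0 (a - t *: b) hM.
rewrite qfBl !qfBr !qfZl !qfZr (qfC b a hM.1) => h.
have e : qf M a a * qf M b b - qf M a b ^+ 2 =
  qf M b b * (qf M a a - t * qf M a b - t * (qf M a b - t * qf M b b)).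
  rewrite /t; field; exact: lt0r_neq0.
have : 0 <= qf M a a * qf M b b - qf M a b ^+ 2.
  rewrite e; apply: mulr_ge0; [exact: ltW | lra].
by rewrite subr_ge0.
Qed.

Lemma qf1E (R : realType) n (v : 'cV[R]_n) : qf 1%:M v v = \sum_(i < n) v i 0 ^+ 2.
Proof. rewrite /qf mulmx1 mxE; apply: eq_bigr => i _; by rewrite mxE expr2. Qed.

Lemma enormE (R : realType) n (v : 'cV[R]_n) : enorm v = Num.sqrt (qf 1%:M v v).
Proof. by rewrite qf1E. Qed.

Lemma id_posdef (R : realType) n : sym_posdef (1%:M : 'M[R]_n).
Proof.
split; first exact: trmx1.
move=> v hv; have := qf1E v; rewrite /qf => ->; rewrite lt_def; apply/andP; split; last first.
  by apply: sumr_ge0 => i _; exact: sqr_ge0.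
apply: contra hv => /eqP /psumr_eq0P h; apply/eqP/matrixP => i j.
have -> : j = 0 by apply: ord1.
rewrite mxE; apply/eqP; rewrite -sqrf_eq0; apply/eqP; apply: h => // k _; exact: sqr_ge0.
Qed.

Lemma enorm_ge0 (R : realType) n (v : 'cV[R]_n) : 0 <= enorm v.
Proof. exact: sqrtr_ge0. Qed.

Lemma enorm_sqr (R : realType) n (v : 'cV[R]_n) : enorm v ^+ 2 = qf 1%:M v v.
Proof. by rewrite enormE sqr_sqrtr // qf_ge0 //; exact: id_posdef. Qed.

Lemma enormD (R : realType) n (a b : 'cV[R]_n) : enorm (a + b) <= enorm a + enorm b.
Proof.
have h1 := id_posdef R n.
rewrite -(ger0_norm (addr_ge0 (enorm_ge0 a) (enorm_ge0 b))) -sqrtr_sqr.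
rewrite enormE ler_sqrt; last by rewrite sqr_ge0.
rewrite qfDl !qfDr (qfC b a h1.1) sqrrD -!enorm_sqr.
have hab : qf 1%:M a b <= enorm a * enorm b.
  rewrite !enormE -sqrtrM ?qf_ge0 //.
  apply: (le_trans (ler_norm _)); rewrite -sqrtr_sqr ler_sqrt; last first.
    by apply: mulr_ge0; apply: qf_ge0.
  exact: qf_CS.
lra.
Qed.

Lemma posdef_unit (R : realType) n (M : 'M[R]_n) : sym_posdef M -> M \in unitmx.
Proof.
move=> [_ hp]; rewrite -row_free_unit; apply: inj_row_free => v hv.
apply/eqP; apply: contraT => /negbTE hv0.
have : v^T != 0 by rewrite -(inj_eq (@trmx_inj _ _ _)) trmxK trmx0 hv0.
move=> /hp; by rewrite trmxK hv mul0mx mxE ltxx.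
Qed.

Lemma inv_posdef (R : realType) n (M : 'M[R]_n) : sym_posdef M -> sym_posdef (invmx M).
Proof.
move=> hM; have hu := posdef_unit hM; split; first by rewrite trmx_inv hM.1.
move=> v hv; set w := invmx M *m v.
have hw : w != 0.
  apply: contra hv => /eqP hw0; apply/eqP.
  by rewrite -(mulKVmx hu v) -/w hw0 mulmx0.
have := hM.2 w hw.
rewrite /w trmx_mul trmx_inv hM.1 !mulmxA -(mulmxA _ _ M) mulVmx // mulmx1.
by [].
Qed.

Lemma Dentry (R : realType) nD ng (K : 'M[R]_ng) (D : 'M[R]_(nD, ng)) v i :
  K \in unitmx -> (D *m v) i 0 = qf K (row i D)^T (invmx K *m v).
Proof.
move=> hu; rewrite /qf trmxK !mulmxA -(mulmxA _ K) mulmxV // mulmx1.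
by rewrite -row_mul [RHS]mxE.
Qed.

Lemma Ktrace (R : realType) nD ng (K : 'M[R]_ng) (D : 'M[R]_(nD, ng)) :
  \tr (D *m K *m D^T) = \sum_i qf K (row i D)^T (row i D)^T.
Proof.
apply: eq_bigr => i _; rewrite /qf trmxK tr_row -row_mul colE mulmxA -colE -row_mul.
by rewrite [RHS]mxE [RHS]mxE.
Qed.

Lemma Dbound (R : realType) nD ng (K : 'M[R]_ng) (D : 'M[R]_(nD, ng)) v :
  sym_posdef K ->
  enorm (D *m v) <= Knorm K D * Num.sqrt (qf (invmx K) v v).
Proof.
move=> hK; have hu := posdef_unit hK.
have hw : qf (invmx K) v v = qf K (invmx K *m v) (invmx K *m v).
  by rewrite /qf trmx_mul trmx_inv hK.1 !mulmxA -(mulmxA _ _ K) mulVmx // mulmx1.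
rewrite /Knorm -sqrtrM; last by rewrite Ktrace; apply: sumr_ge0 => i _; exact: qf_ge0.
rewrite /enorm ler_sqrt; last first.
  apply: mulr_ge0; last exact: (qf_ge0 _ (inv_posdef hK)).
  by rewrite Ktrace; apply: sumr_ge0 => i _; exact: qf_ge0.
rewrite Ktrace mulr_suml; apply: ler_sum => i _.
rewrite (Dentry _ _ _ hu) hw; exact: qf_CS.
Qed.

Lemma resid_bound (R : realType) nD ng (Phi : 'M[R]_(nD, ng)) (y : 'cV[R]_nD)
  (K : 'M[R]_ng) (rho : R) (g0 : 'cV[R]_ng) (D : 'M[R]_(nD, ng)) :
  sym_posdef K -> Knorm K D <= rho ->
  enorm ((Phi + D) *m g0 - y) <= enorm (Phi *m g0 - y) + rho * Num.sqrt (qf (invmx K) g0 g0).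
Proof.
move=> hK hD.
have -> : (Phi + D) *m g0 - y = (Phi *m g0 - y) + D *m g0 by rewrite mulmxDl addrAC.
apply: (le_trans (enormD _ _)); rewrite lerD2l.
apply: (le_trans (Dbound D g0 hK)); apply: ler_wpM2r => //; exact: sqrtr_ge0.
Qed.

Lemma Knorm0 (R : realType) nD ng (K : 'M[R]_ng) : Knorm K (0 : 'M[R]_(nD, ng)) = 0.
Proof. by rewrite /Knorm !mul0mx mxtrace0 sqrtr0. Qed.

Lemma set_has_sup (R : realType) nD ng (Phi : 'M[R]_(nD, ng)) (y : 'cV[R]_nD)
  (K : 'M[R]_ng) (rho : R) (g0 : 'cV[R]_ng) : sym_posdef K -> 0 <= rho ->
  has_sup [set r : R | exists D : 'M[R]_(nD, ng),
                     Knorm K D <= rho /\ r = enorm ((Phi + D) *m g0 - y)].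
Proof.
move=> hK hr; split.
  exists (enorm ((Phi + 0) *m g0 - y)); exists 0; by rewrite Knorm0.
exists (enorm (Phi *m g0 - y) + rho * Num.sqrt (qf (invmx K) g0 g0)).
move=> x [D [hD ->]]; exact: resid_bound.
Qed.

Lemma trZ (R : realType) m n (a : R) (M : 'M[R]_(m, n)) : (a *: M)^T = a *: M^T.
Proof. by apply/matrixP => i j; rewrite !mxE. Qed.

Lemma rank1_trace (R : realType) m n (a s : R) (u : 'cV[R]_m) (w : 'cV[R]_n) (K : 'M[R]_n) :
  w^T *m K *m w = s%:M -> u^T *m u = 1%:M ->
  \tr ((a *: (u *m w^T)) *m K *m (a *: (u *m w^T))^T) = a ^+ 2 * s.
Proof.
move=> hw hu.
rewrite trZ (trmx_mul u) trmxK -!scalemxAl -scalemxAr scalerA !mulmxA.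
have -> : u *m w^T *m K *m w = u *m (w^T *m K *m w) by rewrite !mulmxA.
rewrite hw mul_mx_scalar -scalemxAl scalerA mxtraceZ mxtrace_mulC trace_mx11 hu mxE /=.
by rewrite mulr1 expr2.
Qed.

Theorem mainTheorem3 (R : realType) (nD ng : nat) (Phi : 'M[R]_(nD, ng))
  (y : 'cV[R]_nD) (K : 'M[R]_ng) (lam : R) :
  Phi^T *m y != 0 -> sym_posdef K -> 0 < lam ->
  let g := gReg Phi y K lam in
  g != 0 /\ Phi *m g - y != 0 /\
  (let rho := lam * Num.sqrt ((g^T *m invmx K *m g) 0 0)
              / enorm (Phi *m g - y) in
   0 < rho /\
   forall g' : 'cV[R]_ng,
     worst_resid Phi y K rho g <= worst_resid Phi y K rho g').
Proof.
move=> hPy hK hlam g.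
have hKu := posdef_unit hK; have hKi := inv_posdef hK.
set Ki := invmx K in hKi *.
set A := Phi^T *m Phi + lam *: Ki.
have hA : sym_posdef A.
  split.
    by rewrite /A linearD linearZ /= trmx_mul trmxK hKi.1.
  move=> v hv.
  have -> : (v^T *m A *m v) 0 0 = qf 1%:M (Phi *m v) (Phi *m v) + lam * qf Ki v v.
    rewrite /A /qf mulmxDr mulmxDl entryD -scalemxAr -scalemxAl entryZ.
    by rewrite mulmx1 trmx_mul !mulmxA.
  apply: ltr_wpDl; first by apply: qf_ge0; exact: id_posdef.
  by apply: mulr_gt0 => //; apply: hKi.2.
have hAu := posdef_unit hA.
have hAg : A *m g = Phi^T *m y by rewrite /g /gReg -/Ki -/A mulKVmx.
have key : Phi^T *m (Phi *m g - y) = - (lam *: (Ki *m g)).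
  rewrite mulmxBr mulmxA -hAg /A mulmxDl -scalemxAl.
  by rewrite opprD addrA subrr add0r.
have hg0 : g != 0.
  apply/negP => /eqP h0; move: hAg; rewrite h0 mulmx0 => h.
  by rewrite -h eqxx in hPy.
set r := Phi *m g - y in key *.
have hr0 : r != 0.
  apply/negP => /eqP h0; move: key; rewrite h0 mulmx0 => /esym /eqP.
  rewrite oppr_eq0 scaler_eq0 (gt_eqF hlam) /= => /eqP hk.
  by move: hg0; rewrite -(mulKVmx hKu g) -/Ki hk mulmx0 eqxx.
have hqg : 0 < qf Ki g g by apply: hKi.2.
set h := Num.sqrt ((g^T *m Ki *m g) 0 0).
have hh : 0 < h by rewrite sqrtr_gt0.
have hh2 : h ^+ 2 = qf Ki g g by rewrite sqr_sqrtr // ltW.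
set nr := enorm r.
have hnr : 0 < nr by rewrite /nr enormE sqrtr_gt0; apply: (id_posdef R nD).2.
split => //; split => //.
move=> rho.
have hrho : 0 < rho by apply: divr_gt0 => //; apply: mulr_gt0.
split => // g'.
have up : worst_resid Phi y K rho g <= nr + rho * h.
  apply: ge_sup; first by case: (set_has_sup Phi y g hK (ltW hrho)).
  move=> x [D [hD ->]]; exact: resid_bound.
set u := nr^-1 *: r.
set w := Ki *m g.
have hu1 : qf 1%:M u u = 1.
  rewrite /u qfZl qfZr -enorm_sqr -/nr; field; exact: lt0r_neq0.
have huu : u^T *m u = 1%:M.
  by rewrite [LHS]mx11_scalar -(mulmx1 u^T) -/(qf 1%:M u u) hu1.
have hwg : w^T *m g = (h ^+ 2)%:M.
  rewrite [LHS]mx11_scalar hh2 /w trmx_mul hKi.1 /qf.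
  by rewrite mulmxA.
have hwKw : w^T *m K *m w = (h ^+ 2)%:M.
  rewrite [LHS]mx11_scalar hh2 /w trmx_mul hKi.1 /qf.
  by rewrite !mulmxA -(mulmxA _ Ki K) mulVmx // mulmx1.
set Ds := (rho / h) *: (u *m w^T).
have hr_u : r = nr *: u by rewrite /u scalerA mulfV ?scale1r // lt0r_neq0.
have hDsg : Ds *m g = (rho * h) *: u.
  rewrite /Ds -scalemxAl -mulmxA hwg mul_mx_scalar scalerA.
  congr (_ *: _); field; exact: lt0r_neq0.
set As := Phi + Ds.
set c := nr + rho * h.
have he : As *m g - y = c *: u.
  by rewrite /As mulmxDl addrAC -/r hDsg hr_u scalerDl.
have hAsT : As^T *m u = 0.
  rewrite /As linearD /= mulmxDl /Ds trZ trmx_mul trmxK.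
  rewrite -scalemxAl -mulmxA huu mulmx1.
  have -> : Phi^T *m u = nr^-1 *: - (lam *: w) by rewrite /u -scalemxAr key.
  rewrite scalerN scalerA -scaleNr -scalerDl.
  have -> : - (nr^-1 * lam) + rho / h = 0.
    rewrite /rho; field; by rewrite !lt0r_neq0.
  by rewrite scale0r.
have hKn : Knorm K Ds <= rho.
  rewrite /Knorm /Ds (rank1_trace (rho / h) hwKw huu).
  have -> : (rho / h) ^+ 2 * h ^+ 2 = rho ^+ 2 by field; exact: lt0r_neq0.
  by rewrite sqrtr_sqr ger0_norm // ltW.
have hc : 0 <= c by apply: addr_ge0; [exact: ltW | apply: mulr_ge0; exact: ltW].
have hfin : c <= enorm (As *m g' - y).
  have -> : As *m g' - y = c *: u + As *m (g' - g).
    by rewrite -he mulmxBr [RHS]addrC [RHS]addrA subrK.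
  have hcu : c = enorm (c *: u).
    by rewrite enormE qfZl qfZr hu1 mulr1 -expr2 sqrtr_sqr ger0_norm.
  have huA : u^T *m As = 0 by rewrite -[As]trmxK -trmx_mul hAsT trmx0.
  have h0 : qf 1%:M (c *: u) (As *m (g' - g)) = 0.
    by rewrite /qf mulmx1 trZ -scalemxAl mulmxA huA mul0mx scaler0 mxE.
  have h0' := h0; rewrite (qfC _ _ (id_posdef R nD).1) in h0'.
  have hz : 0 <= qf 1%:M (As *m (g' - g)) (As *m (g' - g)).
    apply: qf_ge0; exact: id_posdef.
  rewrite [X in X <= _]hcu !enormE ler_sqrt; last by apply: qf_ge0; exact: id_posdef.
  rewrite qfDl !qfDr h0 h0'; lra.
apply: (le_trans up); apply: (le_trans hfin).
apply: (sup_upper_bound (set_has_sup Phi y g' hK (ltW hrho))).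
by exists Ds; split.
Qed.
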